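(* Let $\Theta$ and $\Omega=\{\omega_1,\dots,\omega_N\}$ be finite sets and $\rho:2^\Omega\to2^\Theta$ a refining, with induced partition $\Pi_i=\rho(\{\omega_i\})$, $i=1,\dots,N$, of $\Theta$. For each $i$ let $Bel_i$ be a belief function on $\Pi_i$ with mass $m_i$, and let $\overrightarrow{Bel_i}$ be its conditional embedding into $\Theta$. Let $\overrightarrow{Bel}=\overrightarrow{Bel_1}\oplus\cdots\oplus\overrightarrow{Bel_N}$ (Dempster's rule). Then (1) every focal element of $\overrightarrow{Bel}$ is of the form $\bigcup_{i=1}^N e_i$ where, for each $i$, $e_i$ is a focal element of $Bel_i$; and (2) the marginal of $\overrightarrow{Bel}$ on $\Omega$ is the vacuous belief function on $\Omega$ (the one with mass $1$ on $\Omega$).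
   Context: A refining $\rho:2^\Omega\to2^\Theta$ satisfies $\rho(\{\omega\})\ne\emptyset$ for all $\omega$, $\rho(\{\omega\})\cap\rho(\{\omega'\})=\emptyset$ for $\omega\ne\omega'$, $\bigcup_\omega\rho(\{\omega\})=\Theta$, and $\rho(B)=\bigcup_{\omega\in B}\rho(\{\omega\})$. Outer reduction: $\bar\rho(A)=\{\omega\in\Omega:\rho(\{\omega\})\cap A\ne\emptyset\}$ for $A\subseteq\Theta$. Mass functions $m:2^S\to[0,1]$, $m(\emptyset)=0$, $\sum m=1$; focal elements have positive mass; $Bel(A)=\sum_{B\subseteq A}m(B)$. Dempster's rule: $m_\oplus(A)\propto\sum_{B\cap C=A}m_1(B)m_2(C)$ for $A\ne\emptyset$, normalised to sum to $1$. The conditional embedding of a mass $m$ on $\Pi_i$ into $\Theta$ assigns mass $m(E)$ to $E\cup(\Theta\setminus\Pi_i)$ for each $E\subseteq\Pi_i$ and $0$ to all other subsets of $\Theta$. The marginal on $\Omega$ of a mass $m$ on $\Theta$ is $m\!\upharpoonright_\Omega(B)=\sum_{A\subseteq\Theta:\bar\rho(A)=B}m(A)$ for $B\subseteq\Omega$. *)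

(* Defs.v *)
From HB Require Import structures.
From mathcomp Require Import all_boot all_order all_algebra.
Set Implicit Arguments. Unset Strict Implicit. Unset Printing Implicit Defensive.
Import Order.TTheory GRing.Theory Num.Theory.
Local Open Scope ring_scope.

Section DS.
Variable R : realFieldType.

(* A refining given by its values on singletons: rho w = rho({w}). *)
Definition refining (Omega Theta : finType) (rho : Omega -> {set Theta}) : Prop :=
  [/\ forall w, rho w != set0,
      forall w w', w != w' -> [disjoint rho w & rho w'] &
      \bigcup_(w : Omega) rho w = [set: Theta]].

Definition refine_set (Omega Theta : finType) (rho : Omega -> {set Theta})
  (B : {set Omega}) : {set Theta} := \bigcup_(w in B) rho w.

Definition outer_red (Omega Theta : finType) (rho : Omega -> {set Theta})
  (A : {set Theta}) : {set Omega} := [set w | rho w :&: A != set0].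

(* A mass function on the frame S (a subset of Theta), represented as a function
   on subsets of Theta vanishing outside 2^S. *)
Definition is_mass (Theta : finType) (S : {set Theta}) (m : {set Theta} -> R) : Prop :=
  [/\ m set0 = 0,
      forall A : {set Theta}, 0 <= m A,
      forall A : {set Theta}, ~~ (A \subset S) -> m A = 0 &
      \sum_(A : {set Theta} | A \subset S) m A = 1].

Definition focal (Theta : finType) (m : {set Theta} -> R) (A : {set Theta}) : Prop :=
  0 < m A.

Definition Bel (Theta : finType) (m : {set Theta} -> R) (A : {set Theta}) : R :=
  \sum_(B : {set Theta} | B \subset A) m B.

Definition dempster_unnorm (Theta : finType) (m1 m2 : {set Theta} -> R)
  (A : {set Theta}) : R :=
  \sum_(B : {set Theta}) \sum_(C : {set Theta} | B :&: C == A) m1 B * m2 C.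

Definition dempster (Theta : finType) (m1 m2 : {set Theta} -> R)
  (A : {set Theta}) : R :=
  if A == set0 then 0
  else dempster_unnorm m1 m2 A /
       \sum_(A' : {set Theta} | A' != set0) dempster_unnorm m1 m2 A'.

Definition vacuous (Theta : finType) (A : {set Theta}) : R :=
  if A == [set: Theta] then 1 else 0.

Definition cond_embed (Theta : finType) (Pi : {set Theta}) (m : {set Theta} -> R)
  (A : {set Theta}) : R :=
  \sum_(E : {set Theta} | (E \subset Pi) && (E :|: ~: Pi == A)) m E.

(* Dempster combination of a family indexed by Omega, in the order of enum Omega
   (vacuous is the neutral element; Dempster's rule is commutative/associative). *)
Definition dempster_all (Omega Theta : finType) (M : Omega -> {set Theta} -> R) :
  {set Theta} -> R :=
  foldr (fun i acc => dempster (M i) acc) (@vacuous Theta) (enum Omega).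

Definition marginal (Omega Theta : finType) (rho : Omega -> {set Theta})
  (m : {set Theta} -> R) (B : {set Omega}) : R :=
  \sum_(A : {set Theta} | outer_red rho A == B) m A.

End DS.

(* Main.v *)
Require Import Defs.
From HB Require Import structures.
From mathcomp Require Import all_boot all_order all_algebra.
Import Order.TTheory GRing.Theory Num.Theory.
Local Open Scope ring_scope.

Section Proof.
Variables (R : realFieldType) (Omega Theta : finType)
  (rho : Omega -> {set Theta}) (m : Omega -> {set Theta} -> R).
Hypothesis hr : refining rho.
Hypothesis hm : forall i, is_mass (rho i) (m i).

Lemma sum_nz (I : finType) (P : pred I) (F : I -> R) :
  \sum_(i | P i) F i != 0 -> exists2 i, P i & F i != 0.
Proof.
move=> H; case: (pickP [pred i | P i && (F i != 0)]) => [i /andP[]|H0]; first by eauto.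
rewrite big1 ?eqxx // in H => i Pi; move: (H0 i) => /=; rewrite Pi /=.
by move/negbFE/eqP.
Qed.

Lemma sum_eq1 (T : finType) (a : T) (x : R) :
  \sum_(A : T) (if a == A then x else 0) = x.
Proof.
rewrite (bigD1 a) //= eqxx big1 ?addr0 // => A /negbTE; by rewrite eq_sym => ->.
Qed.

Lemma focal_sub i E : focal (m i) E -> E \subset rho i /\ E != set0.
Proof.
have [h0 hpos hout hsum] := hm i; rewrite /focal => hE; split.
  by apply/negPn/negP => /hout hz; rewrite hz ltxx in hE.
by apply/negP => /eqP hz; rewrite hz h0 ltxx in hE.
Qed.

Definition CE i := cond_embed (rho i) (m i).

Lemma CE_ge0 i B : 0 <= CE i B.
Proof. have [h0 hpos hout hsum] := hm i; exact: sumr_ge0. Qed.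

Lemma CE_sum i : \sum_B CE i B = 1.
Proof.
have [h0 hpos hout hsum] := hm i.
rewrite /CE /cond_embed -hsum.
under eq_bigr do rewrite big_mkcond.
rewrite exchange_big /= [RHS]big_mkcond; apply: eq_bigr => E _.
case: ifP => HE /=; first exact: sum_eq1.
by rewrite big1.
Qed.

Lemma CE_nz i B : CE i B != 0 ->
  exists2 E, focal (m i) E & B = E :|: ~: rho i.
Proof.
have [h0 hpos hout hsum] := hm i.
move=> /sum_nz [E /andP[_ /eqP <-] hE]; exists E => //.
by rewrite /focal lt_def hE hpos.
Qed.

Definition Inv (s : seq Omega) (mu : {set Theta} -> R) :=
  [/\ forall A, 0 <= mu A, \sum_A mu A = 1 &
   forall A, mu A != 0 -> exists e : Omega -> {set Theta},
     [/\ forall i, i \in s -> focal (m i) (e i),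
         forall i, i \notin s -> e i = rho i &
         A = \bigcup_(j : Omega) e j]].

Lemma key s mu i B C : i \notin s -> Inv s mu -> CE i B * mu C != 0 ->
  exists e : Omega -> {set Theta},
     [/\ forall j, j \in i :: s -> focal (m j) (e j),
         forall j, j \notin i :: s -> e j = rho j &
         B :&: C = \bigcup_(j : Omega) e j].
Proof.
move=> his [h0 h1 h2]; rewrite mulf_eq0 negb_or => /andP[/CE_nz [E fE ->] /h2].
move=> [e [e1 e2 ->]].
have [hr1 hr2 hr3] := hr.
have esub : forall j, e j \subset rho j.
  move=> j; case: (boolP (j \in s)) => hj; first by case: (focal_sub _ _ (e1 _ hj)).
  by rewrite e2.
have [Esub _] := focal_sub _ _ fE.
exists (fun j => if j == i then E else e j); split.
- move=> j; rewrite inE; case: eqP => [-> //|_] /= /e1 //.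
- move=> j; rewrite inE negb_or => /andP[/negbTE -> /e2] //.
- have heq : forall j, (E :|: ~: rho i) :&: e j = (if j == i then E else e j).
    move=> j; case: eqP => [->|/eqP nji].
      rewrite e2 // setIUl (setIC (~: _)) setICr setU0; exact/setIidPl.
    apply/setIidPr; apply: subset_trans (subsetUr _ _).
    apply: subset_trans (esub j) _; rewrite -disjoints_subset; exact: hr2.
  apply/setP => x; rewrite inE; apply/andP/bigcupP.
    case=> hB /bigcupP [j _ hj]; exists j => //; rewrite -heq inE hB hj.
    done.
  case=> j _; rewrite -heq inE => /andP [hB hj]; split => //.
  by apply/bigcupP; exists j.
Qed.

Lemma step s mu i : i \notin s -> Inv s mu -> Inv (i :: s) (dempster (CE i) mu).
Proof.
move=> his hI; have [h0 h1 h2] := hI.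
set U := dempster_unnorm (CE i) mu.
have Uge0 : forall A, 0 <= U A.
  move=> A; apply: sumr_ge0 => B _; apply: sumr_ge0 => C _.
  by apply: mulr_ge0; [apply: CE_ge0|apply: h0].
have Usum : \sum_A U A = 1.
  rewrite /U /dempster_unnorm exchange_big /=.
  transitivity (\sum_B \sum_C CE i B * mu C).
    apply: eq_bigr => B _.
    under eq_bigr do rewrite big_mkcond.
    rewrite exchange_big /=; apply: eq_bigr => C _; exact: sum_eq1.
  under eq_bigr do rewrite -mulr_sumr.
  by rewrite -mulr_suml CE_sum h1 mulr1.
have U0 : U set0 = 0.
  apply: big1 => B _; apply: big1 => C /eqP hBC; apply/eqP.
  case: (eqVneq (CE i B * mu C) 0) => // /(key _ _ _ _ _ his hI) [e [e1 e2 e3]].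
  have [_ /set0Pn [x hx]] := focal_sub _ _ (e1 i (mem_head _ _)).
  move: hBC; rewrite e3 => /setP /(_ x); rewrite inE.
  by move=> /negbT /bigcupP; case; exists i.
have den : \sum_(A' | A' != set0) U A' = 1.
  by rewrite -Usum [RHS](bigD1 set0) //= U0 add0r.
have dU : forall A, dempster (CE i) mu A = U A.
  move=> A; rewrite /dempster -/U; case: eqP => [->|_]; first (rewrite U0; done).
  by rewrite den divr1.
split.
- by move=> A; rewrite dU.
- by under eq_bigr do rewrite dU.
- move=> A; rewrite dU => /sum_nz [B _ /sum_nz [C /eqP <- hC]].
  exact: (key _ _ _ _ _ his hI hC).
Qed.

Lemma inv_all s : uniq s ->
  Inv s (foldr (fun i acc => dempster (CE i) acc) (@vacuous R Theta) s).
Proof.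
elim: s => [|i s IH] /=.
  move=> _; have [hr1 hr2 hr3] := hr; split.
  - by move=> A; rewrite /vacuous; case: ifP => _; rewrite ?ler01 ?lexx.
  - rewrite -(@sum_eq1 _ [set: Theta] 1); apply: eq_bigr => A _; by rewrite /vacuous eq_sym.
  - move=> A; rewrite /vacuous; case: (A =P setT) => [-> _|]; last by rewrite eqxx.
    by exists rho; split.
by case/andP => his us; apply: step => //; apply: IH.
Qed.

End Proof.

Theorem lemma3 (R : realFieldType) (Omega Theta : finType)
  (rho : Omega -> {set Theta}) (m : Omega -> {set Theta} -> R) :
  refining rho ->
  (forall i, is_mass (rho i) (m i)) ->
  let mB := dempster_all (fun i => cond_embed (rho i) (m i)) in
  (forall A : {set Theta}, focal mB A ->
     exists e : Omega -> {set Theta},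
       (forall i, focal (m i) (e i)) /\ A = \bigcup_(i : Omega) e i) /\
  (forall B : {set Omega}, marginal rho mB B = vacuous R B).
Proof.
move=> hr hm mB.
have [h0 h1 h2] : @Inv _ _ _ rho m (enum Omega) mB by apply: inv_all => //; exact: enum_uniq.
have hfoc : forall A, mB A != 0 -> exists e : Omega -> {set Theta},
       (forall i, focal (m i) (e i)) /\ A = \bigcup_(i : Omega) e i.
  move=> A /h2 [e [e1 e2 e3]]; exists e; split => // i; apply: e1; exact: mem_enum.
split.
  by move=> A hA; apply: hfoc; rewrite /focal in hA; rewrite gt_eqF.
have Hout : forall A, mB A != 0 -> outer_red rho A = setT.
  move=> A /hfoc [e [e1 ->]]; apply/setP => w; rewrite !inE.
  have [hs /set0Pn [x hx]] := @focal_sub _ _ _ rho m hm _ _ (e1 w).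
  apply/set0Pn; exists x; rewrite inE (subsetP hs) //=.
  by apply/bigcupP; exists w.
move=> B; rewrite /marginal /vacuous; case: eqP => [->|nB].
  rewrite -h1 [RHS](bigID (fun A => outer_red rho A == setT)) /= [X in _ + X]big1 ?addr0 //.
  move=> A /eqP nA; apply/eqP; case: (eqVneq (mB A) 0) => // /Hout //.
apply: big1 => A /eqP HA; apply/eqP; case: (eqVneq (mB A) 0) => // /Hout.
by rewrite HA => /nB.
Qed.
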